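(* Let $G$ and $H$ be finite simple graphs. If $G$ or $H$ is a cover graph, then the direct product $G \times H$ is a cover graph.
   Context: A graph is a cover graph if it is the underlying (undirected) graph of the Hasse diagram of some finite partially ordered set. The direct product $G \times H$ has vertex set $V(G)\times V(H)$, with $(g_i,h_s)$ adjacent to $(g_j,h_t)$ if and only if $g_ig_j \in E(G)$ and $h_sh_t \in E(H)$. *)

(* Defs.v *)
From mathcomp Require Import all_boot.
Set Implicit Arguments. Unset Strict Implicit. Unset Printing Implicit Defensive.

Definition simple_graph (T : finType) (e : rel T) : Prop :=
  symmetric e /\ irreflexive e.

Definition strict_porder (T : finType) (lt : rel T) : Prop :=
  irreflexive lt /\ transitive lt.

Definition covers (T : finType) (lt : rel T) (x y : T) : bool :=
  lt x y && [forall z, ~~ (lt x z && lt z y)].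

Definition cover_graph (T : finType) (e : rel T) : Prop :=
  exists lt : rel T, strict_porder lt /\
    forall x y, e x y = covers lt x y || covers lt y x.

Definition direct_prod (T1 T2 : finType) (e1 : rel T1) (e2 : rel T2) : rel (T1 * T2) :=
  fun u v => e1 u.1 v.1 && e2 u.2 v.2.

(* Main.v *)
Require Import Defs.
From mathcomp Require Import all_boot.

Section Gen.
Variables (T S : finType) (e : rel T) (f : T -> S) (lt0 : rel S).
Hypothesis lt0_po : strict_porder lt0.
Hypothesis esym : symmetric e.
Hypothesis ecov : forall u v, e u v -> covers lt0 (f u) (f v) || covers lt0 (f v) (f u).

Let D : rel T := fun u v => e u v && covers lt0 (f u) (f v).
Let lt : rel T := fun u v => [exists w, D u w && connect D w v].

Lemma D_lt0 {u v} : D u v -> lt0 (f u) (f v).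
Proof. by case/andP=> _ /andP[]. Qed.

Lemma conn_lt0 {w v} : connect D w v -> w = v \/ lt0 (f w) (f v).
Proof.
move/connectP=> [p]; elim: p w => [|a p IH] w /=; first by move=> _ ->; left.
case/andP=> Dwa Pp Ev; right; have := D_lt0 Dwa.
case: (IH a Pp Ev) => [<- //|h1 h2].
by case: lt0_po => _ tr; exact: tr h2 h1.
Qed.

Lemma lt_lt0 {u v} : lt u v -> lt0 (f u) (f v).
Proof.
case/existsP=> w /andP[Duw Cwv]; have h := D_lt0 Duw.
case: (conn_lt0 Cwv) => [<- //|h2]; by case: lt0_po => _ tr; exact: tr h h2.
Qed.

Lemma conn_lt {w v} : connect D w v -> w = v \/ lt w v.
Proof.
move/connectP=> [[|a p]] /=; first by move=> _ ->; left.
case/andP=> Dwa Pp Ev; right; apply/existsP; exists a; rewrite Dwa /=.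
by apply/connectP; exists p.
Qed.

Lemma lt_po : strict_porder lt.
Proof.
split.
  move=> u; apply/negbTE/negP=> h; have := lt_lt0 h; by case: lt0_po => ir _; rewrite ir.
move=> v u x /existsP[w /andP[Duw Cwv]] /existsP[w' /andP[Dvw' Cw'x]].
apply/existsP; exists w; rewrite Duw /=.
apply: connect_trans Cwv _; apply: connect_trans (connect1 Dvw') Cw'x.
Qed.

Lemma D_covers {u v} : D u v -> covers lt u v.
Proof.
move=> Duv; apply/andP; split.
  by apply/existsP; exists v; rewrite Duv connect0.
apply/forallP=> z; apply/negP=> /andP[/lt_lt0 h1 /lt_lt0 h2].
case/andP: Duv => _ /andP[_ /forallP /(_ (f z))]; by rewrite h1 h2.
Qed.

Lemma covers_D {u v} : covers lt u v -> D u v.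
Proof.
case/andP=> /existsP[w /andP[Duw Cwv]] /forallP H.
case: (conn_lt Cwv) => [<- //|ltwv].
have := H w; rewrite ltwv andbT; move/negP=> []; apply/existsP; exists w.
by rewrite Duw connect0.
Qed.

Lemma gen_cover : cover_graph e.
Proof.
exists lt; split; first exact: lt_po.
move=> x y; apply/idP/idP.
  move=> exy; case/orP: (ecov _ _ exy) => h.
    have hd : D x y by apply/andP. by rewrite (D_covers hd).
  have hd : D y x by apply/andP; rewrite esym. by rewrite (D_covers hd) orbT.
by case/orP=> /covers_D /andP[] // h _; rewrite esym.
Qed.
End Gen.

Theorem theorem4 (T1 T2 : finType) (e1 : rel T1) (e2 : rel T2) :
  simple_graph e1 -> simple_graph e2 ->
  cover_graph e1 \/ cover_graph e2 ->
  cover_graph (direct_prod e1 e2).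
Proof.
move=> [s1 _] [s2 _] [[lt [po H]]|[lt [po H]]].
  apply: (@gen_cover _ _ _ fst lt po).
    by move=> u v; rewrite /direct_prod s1 s2.
  by move=> u v /andP[h _]; rewrite -H.
apply: (@gen_cover _ _ _ snd lt po).
  by move=> u v; rewrite /direct_prod s1 s2.
by move=> u v /andP[_ h]; rewrite -H.
Qed.
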